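(* Let $\vec{\mathcal H}=(V,\mathcal A)$ be a directed hypergraph and $s,t\in V$ distinct. Let $\vec G=(V',A')$ be the directed graph with $V'=V\cup\{w_{(X,v)}:(X,v)\in\mathcal A\}$ (one new vertex per hyperarc) whose arc set contains, for every hyperarc $(X,v)\in\mathcal A$, the arc $w_{(X,v)}v$ and, for every $x\in X$, $|\mathcal A|+1$ parallel arcs $x\,w_{(X,v)}$; let $\overleftarrow G$ be obtained from $\vec G$ by reversing every arc. Then $S^{\vec{\mathcal H}}_{s,t}=V\cap S^{\vec G}_{s,t}$ and $T^{\vec{\mathcal H}}_{t,s}=V\cap S^{\overleftarrow G}_{t,s}$.
   Context: A directed hypergraph $\vec{\mathcal H}=(V,\mathcal A)$ has finite vertex set $V$ and a finite multiset $\mathcal A$ of hyperarcs $(X,v)$ with $X\subseteq V$, $v\in V\setminus X$. For $\emptyset\ne Z\subsetneq V$: $d^+_{\vec{\mathcal H}}(Z)$ is the number of hyperarcs $(X,v)$ with $v\notin Z$ and $X\cap Z\ne\emptyset$; $d^-_{\vec{\mathcal H}}(Z)$ is the number of hyperarcs $(X,v)$ with $v\in Z$ and $X\not\subseteq Z$. In a directed graph $G$, $d^+_G(Z)$ is the number of arcs with tail in $Z$ and head outside $Z$. For vertices $a\ne b$, an $(a,b)$-separator is a vertex set containing $a$ but not $b$. $S^{\vec{\mathcal H}}_{s,t}$ denotes the (unique) $(s,t)$-separator of minimum $d^+_{\vec{\mathcal H}}$ that is contained in every $(s,t)$-separator of minimum $d^+_{\vec{\mathcal H}}$; $T^{\vec{\mathcal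 H}}_{t,s}$ denotes the (unique) $(t,s)$-separator of minimum $d^-_{\vec{\mathcal H}}$ that is contained in every $(t,s)$-separator of minimum $d^-_{\vec{\mathcal H}}$. For a directed graph $G$, $S^{G}_{a,b}$ denotes the unique $(a,b)$-separator of minimum $d^+_G$ contained in every $(a,b)$-separator of minimum $d^+_G$. (Uniqueness follows from submodularity of these degree functions.) *)

(* Defs.v *)
From mathcomp Require Import all_boot.
Set Implicit Arguments. Unset Strict Implicit. Unset Printing Implicit Defensive.

(* Directed hypergraph on a finite vertex type V: hyperarcs are indexed by a
   finite type A (a multiset of hyperarcs); hyperarc a is (tl a, hd a). *)

Definition hdout (V A : finType) (tl : A -> {set V}) (hd : A -> V) (Z : {set V}) : nat :=
  #|[set a | (hd a \notin Z) && (tl a :&: Z != set0)]|.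

Definition hdin (V A : finType) (tl : A -> {set V}) (hd : A -> V) (Z : {set V}) : nat :=
  #|[set a | (hd a \in Z) && ~~ (tl a \subset Z)]|.

Definition gdout (W E : finType) (tl hd : E -> W) (Z : {set W}) : nat :=
  #|[set e | (tl e \in Z) && (hd e \notin Z)]|.

Definition is_sep (T : finType) (a b : T) (Z : {set T}) : Prop :=
  a \in Z /\ b \notin Z.

Definition is_min_incl_sep (T : finType) (d : {set T} -> nat) (a b : T)
    (S : {set T}) : Prop :=
  [/\ is_sep a b S,
      (forall Z, is_sep a b Z -> d S <= d Z) &
      (forall Z, is_sep a b Z -> d Z = d S -> S \subset Z)].

(* The digraph G associated to the hypergraph:
   vertices V + A (inr a = w_a); arcs:
   - inl a : the arc w_a -> hd a;
   - inr (a, x, i) with x \in tl a, i < |A|+1 : copy i of the arc x -> w_a. *)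
Definition Garc_pred (V A : finType) (tl : A -> {set V}) :
    pred (A * V * 'I_#|A|.+1) := fun p => p.1.2 \in tl p.1.1.

Definition Garc (V A : finType) (tl : A -> {set V}) : finType :=
  (A + {p : A * V * 'I_#|A|.+1 | Garc_pred tl p})%type.

Definition Gtail (V A : finType) (tl : A -> {set V}) (hd : A -> V)
    (e : Garc tl) : (V + A)%type :=
  match e with
  | inl a => inr a
  | inr p => inl (val p).1.2
  end.

Definition Ghead (V A : finType) (tl : A -> {set V}) (hd : A -> V)
    (e : Garc tl) : (V + A)%type :=
  match e with
  | inl a => inl (hd a)
  | inr p => inr (val p).1.1
  end.

Definition trace_V (V A : finType) (Z : {set (V + A)}) : {set V} :=
  [set v | inl v \in Z].
Arguments Gtail {V A} tl hd e.
Arguments Ghead {V A} tl hd e.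

(* Main.v *)
Require Import Defs.
From mathcomp Require Import all_boot.

Lemma generic (T U : finType) (dH : {set T} -> nat) (dG : {set U} -> nat) (SH : {set T}) (SG : {set U})
  (tr : {set U} -> {set T}) (ex : {set T} -> {set U}) s t s' t' :
  (forall Y, tr (ex Y) = Y) -> (forall Y, dG (ex Y) <= dH Y) ->
  (forall Z, dH (tr Z) <= dG Z) ->
  (forall Z, is_sep s' t' Z <-> is_sep s t (tr Z)) ->
  (forall Z1 Z2 : {set U}, Z1 \subset Z2 -> tr Z1 \subset tr Z2) ->
  is_min_incl_sep dH s t SH -> is_min_incl_sep dG s' t' SG -> SH = tr SG.
Proof.
move=> trex ub lb sepE trmono [sH mH iH] [sG mG iG].
have sex : is_sep s' t' (ex SH) by apply/sepE; rewrite trex.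
have str : is_sep s t (tr SG) by apply/sepE.
have h1 := mG _ sex. have h2 := ub SH. have h3 := mH _ str. have h4 := lb SG.
have e1 : dH (tr SG) = dH SH by apply/eqP; rewrite eqn_leq h3 andbT;
  apply: leq_trans h4 (leq_trans h1 h2).
have e2 : dG (ex SH) = dG SG by apply/eqP; rewrite eqn_leq h1 andbT;
  apply: leq_trans h2 (leq_trans h3 h4).
apply/eqP; rewrite eqEsubset (iH _ str e1) /=.
have := trmono _ _ (iG _ sex e2); by rewrite trex.
Qed.

Section S.
Variables (V A : finType) (tl : A -> {set V}) (hd : A -> V).

Definition inlG := @inl A {p : A * V * 'I_#|A|.+1 | Garc_pred tl p}.

Lemma inlG_inj : injective inlG.
Proof. by move=> x y []. Qed.

Lemma copies (a : A) (x : V) (Hx : x \in tl a) :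
  #|A|.+1 <= #|[set (inr (exist (Garc_pred tl) (a, x, i) Hx) : Garc tl) | i : 'I_#|A|.+1]|.
Proof.
rewrite card_imset ?cardsT ?card_ord //.
move=> i j E.
have := congr1 (fun e : Garc tl => match e with inr p => (val p).2 | inl _ => i end) E.
by [].
Qed.

Lemma lb1 (Z : {set (V + A)}) :
  hdout tl hd (trace_V Z) <= gdout (Gtail tl hd) (Ghead tl hd) Z.
Proof.
case: (boolP [exists a, (tl a :&: trace_V Z != set0) && (inr a \notin Z)]).
- move/existsP=> [a /andP[/set0Pn [x Hx] Ha]].
  move: Hx; rewrite inE => /andP[Hxa HxZ]. rewrite inE in HxZ.
  rewrite /hdout /hdin; have Hc := copies _ _ Hxa; apply: leq_trans (ltnW (leq_ltn_trans (max_card _) Hc)) _.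
  apply: subset_leq_card; apply/subsetP=> e /imsetP[i _ ->].
  by rewrite inE /= HxZ Ha.
- move/existsPn => H. rewrite /hdout /gdout -(card_imset _ inlG_inj).
  apply: subset_leq_card; apply/subsetP=> e /imsetP[a].
  rewrite inE => /andP[Hh Ht] ->.
  move: (H a); rewrite Ht /= negbK => HaZ.
  by rewrite inE /= HaZ; move: Hh; rewrite inE.
Qed.

Definition ex1 (Y : {set V}) : {set (V + A)} :=
  [set z | match z with inl v => v \in Y | inr a => tl a :&: Y != set0 end].

Lemma ub1 Y : gdout (Gtail tl hd) (Ghead tl hd) (ex1 Y) <= hdout tl hd Y.
Proof.
rewrite /hdout /gdout -(card_imset _ inlG_inj).
apply: subset_leq_card; apply/subsetP=> [[a|[[[a x] i] Hx]]]; rewrite !inE /=.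
- by move=> /andP[H1 H2]; apply/imsetP; exists a => //; rewrite inE H1 H2.
- move=> /andP[H1]; rewrite negbK => /eqP E.
  have : x \in tl a :&: Y by rewrite inE H1 andbT; exact: Hx.
  by rewrite E inE.
Qed.

Lemma lb2 (Z : {set (V + A)}) :
  hdin tl hd (trace_V Z) <= gdout (Ghead tl hd) (Gtail tl hd) Z.
Proof.
case: (boolP [exists a, (inr a \in Z) && ~~ (tl a \subset trace_V Z)]).
- move/existsP=> [a /andP[Ha /subsetPn [x Hxa HxZ]]].
  rewrite inE in HxZ.
  rewrite /hdout /hdin; have Hc := copies _ _ Hxa; apply: leq_trans (ltnW (leq_ltn_trans (max_card _) Hc)) _.
  apply: subset_leq_card; apply/subsetP=> e /imsetP[i _ ->].
  by rewrite inE /= HxZ Ha.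
- move/existsPn => H. rewrite /hdin /gdout -(card_imset _ inlG_inj).
  apply: subset_leq_card; apply/subsetP=> e /imsetP[a].
  rewrite inE => /andP[Hh Ht] ->.
  move: (H a); rewrite Ht andbT => HaZ.
  by rewrite inE /= HaZ andbT; move: Hh; rewrite inE.
Qed.

Definition ex2 (Y : {set V}) : {set (V + A)} :=
  [set z | match z with inl v => v \in Y | inr a => tl a \subset Y end].

Lemma ub2 Y : gdout (Ghead tl hd) (Gtail tl hd) (ex2 Y) <= hdin tl hd Y.
Proof.
rewrite /hdin /gdout -(card_imset _ inlG_inj).
apply: subset_leq_card; apply/subsetP=> [[a|[[[a x] i] Hx]]]; rewrite !inE /=.
- by move=> /andP[H1 H2]; apply/imsetP; exists a => //; rewrite inE H1 H2.
- by move=> /andP[/subsetP H1]; rewrite (H1 x Hx).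
Qed.

End S.

Theorem mainTheorem14 (V A : finType) (tl : A -> {set V}) (hd : A -> V)
    (Hhyp : forall a, hd a \notin tl a) (s t : V) (Hst : s != t) :
  (forall (SH : {set V}) (SG : {set (V + A)}),
      is_min_incl_sep (hdout tl hd) s t SH ->
      is_min_incl_sep (gdout (Gtail tl hd) (Ghead tl hd)) (inl s) (inl t) SG ->
      SH = trace_V SG) /\
  (forall (TH : {set V}) (SGr : {set (V + A)}),
      is_min_incl_sep (hdin tl hd) t s TH ->
      is_min_incl_sep (gdout (Ghead tl hd) (Gtail tl hd)) (inl t) (inl s) SGr ->
      TH = trace_V SGr).
Proof.
have sepE : forall (a b : V) (Z : {set (V + A)}),
    is_sep (inl a) (inl b) Z <-> is_sep a b (trace_V Z).
  by move=> a b Z; rewrite /is_sep /trace_V !inE.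
have trm : forall Z1 Z2 : {set (V + A)}, Z1 \subset Z2 -> trace_V Z1 \subset trace_V Z2.
  by move=> Z1 Z2 /subsetP H; apply/subsetP=> v; rewrite !inE; apply: H.
split.
- move=> SH SG; apply: (@generic _ _ _ _ SH SG _ (ex1 V A tl)) => //.
  + by move=> Y; apply/setP=> v; rewrite !inE.
  + exact: ub1 V A tl hd.
  + exact: lb1 V A tl hd.
- move=> SH SG; apply: (@generic _ _ _ _ SH SG _ (ex2 V A tl)) => //.
  + by move=> Y; apply/setP=> v; rewrite !inE.
  + exact: ub2 V A tl hd.
  + exact: lb2 V A tl hd.
Qed.
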